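(* Let $n\ge 2$, let $\alpha_1,\dots,\alpha_n\in\mathbb C$, and let $T\in\mathcal L(\mathcal P_n)$ be $T=I+\alpha_1D+\alpha_2D^2+\cdots+\alpha_nD^n$. Then $\alpha_1=0$ if and only if there exists a constant $\Gamma_T>0$ such that for every $f\in\mathcal P_n$ of degree at least $2$ with simple roots, $$\tau(f)\,R_T(f)<\Gamma_T .$$
   Context: $\mathcal P_n$ is the complex vector space of polynomials of degree at most $n$, $\mathcal L(\mathcal P_n)$ the linear operators on it, $D$ the differentiation operator and $I$ the identity. For a nonzero polynomial $f$, $Z(f)$ is its set of roots. For a nonconstant $f\in\mathcal P_n$, $R_T(f):=\max_{w\in Z(Tf)}\min_{x\in Z(f)}|w-x|$ (equivalently, the least $r\ge0$ with $Z(Tf)\subset Z(f)+\mathbb D(r)$, where $\mathbb D(r)=\{z:|z|\le r\}$ and $A+B=\{u+v:u\in A,v\in B\}$). For a polynomial $f$ of degree at least $2$ with at least two distinct roots, $\tau(f):=\min\{|w-v|: w\in Z(f),\ v\in Z(f')\setminus\{w\}\}$. ''Simple roots'' means all roots have multiplicity one. *)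

(* Defs.v *)
(* Complex numbers are modelled by an arbitrary
   numClosedFieldType (e.g. algC). *)
From HB Require Import structures.
From mathcomp Require Import all_boot all_order all_algebra.
Set Implicit Arguments. Unset Strict Implicit. Unset Printing Implicit Defensive.
Import Order.TTheory GRing.Theory Num.Theory.
Local Open Scope ring_scope.

Section Defs.
Variable C : numClosedFieldType.

(* Z(f): the roots of f, listed with multiplicity (a root list such that
   f = lead_coef f * prod (X - z)).  For f = 0 this list is meaningless but
   never used. *)
Definition roots (f : {poly C}) : seq C := sval (closed_field_poly_normal f).

Definition minseq (s : seq C) : C := \big[Num.min/head 0 s]_(x <- s) x.

Definition distZ (w : C) (f : {poly C}) : C := minseq [seq `|w - x| | x <- roots f].

(* T = I + alpha_1 D + ... + alpha_n D^n  (alpha_0 is ignored) *)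
Definition Top (n : nat) (alpha : nat -> C) (f : {poly C}) : {poly C} :=
  f + \sum_(1 <= k < n.+1) alpha k *: f^`(k).

Definition RT (n : nat) (alpha : nat -> C) (f : {poly C}) : C :=
  \big[Num.max/0]_(w <- roots (Top n alpha f)) distZ w f.

Definition tau (f : {poly C}) : C :=
  minseq [seq `|wv.1 - wv.2| | wv <- [seq (w, v) | w <- roots f, v <- roots f^`()]
                              & wv.1 != wv.2].

Definition simple_roots (f : {poly C}) : Prop :=
  forall z : C, root f z -> mup z f = 1%N.

End Defs.

(* Main.v *)
Require Import Defs.
From HB Require Import structures.
From mathcomp Require Import all_boot all_order all_algebra.
From Stdlib Require Import Lia Psatz.
Import Order.TTheory GRing.Theory Num.Theory.
Local Open Scope ring_scope.

Module Helpers.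
Set Implicit Arguments. Unset Strict Implicit. Unset Printing Implicit Defensive.
Local Notation roots := Defs.roots.
Section Aux.
Variable C : numClosedFieldType.
Implicit Types (p f : {poly C}) (s : seq C).

Lemma roots_spec p : p = lead_coef p *: \prod_(z <- roots p) ('X - z%:P).
Proof. exact: (svalP (closed_field_poly_normal p)). Qed.

Lemma mem_roots p x : p != 0 -> (x \in roots p) = root p x.
Proof.
move=> pn0; rewrite [in RHS](roots_spec p) rootZ ?lead_coef_eq0 //.
by rewrite root_prod_XsubC.
Qed.

Lemma size_roots p : p != 0 -> size (roots p) = (size p).-1.
Proof.
move=> pn0; rewrite [in RHS](roots_spec p) size_scale ?lead_coef_eq0 //.
by rewrite size_prod_XsubC.
Qed.

Lemma root_of_roots p x : x \in roots p -> root p x.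
Proof.
case: (eqVneq p 0) => [->|pn0]; first by rewrite root0.
by rewrite mem_roots.
Qed.

Lemma min_real {x y : C} : x \is Num.real -> y \is Num.real ->
  [/\ Num.min x y <= x, Num.min x y <= y & (Num.min x y = x \/ Num.min x y = y)].
Proof.
move=> xr yr; case: (real_leP xr yr) => h.
  by split=> //; left.
by split=> //; [exact: ltW | right].
Qed.

Lemma max_real {x y : C} : x \is Num.real -> y \is Num.real ->
  [/\ x <= Num.max x y, y <= Num.max x y & (Num.max x y = x \/ Num.max x y = y)].
Proof.
move=> xr yr; case: (real_leP xr yr) => h.
  by split=> //; right.
by split=> //; [exact: ltW | left].
Qed.

Lemma bigmin_props {t : seq C} {idx : C} :
  idx \is Num.real -> (forall x, x \in t -> x \is Num.real) ->
  [/\ \big[Num.min/idx]_(x <- t) x \is Num.real,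
      \big[Num.min/idx]_(x <- t) x <= idx &
      forall y, y \in t -> \big[Num.min/idx]_(x <- t) x <= y].
Proof.
move=> ir; elim: t => [|a t IH] ht.
  by rewrite big_nil; split=> //.
have ar : a \is Num.real by apply: ht; rewrite inE eqxx.
have [Br Bi By] : [/\ \big[Num.min/idx]_(x <- t) x \is Num.real,
      \big[Num.min/idx]_(x <- t) x <= idx &
      forall y, y \in t -> \big[Num.min/idx]_(x <- t) x <= y].
  by apply: IH => x xt; apply: ht; rewrite inE xt orbT.
rewrite big_cons; have [m1 m2 m3] := min_real ar Br.
split.
- by case: m3 => ->.
- exact: le_trans m2 Bi.
- move=> y; rewrite inE => /orP [/eqP ->|yt] //.
  exact: le_trans m2 (By _ yt).
Qed.

Lemma minseq_mem s : s != [::] -> minseq s \in s.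
Proof.
move=> sn0; rewrite /minseq big_seq; apply: (big_ind (fun x => x \in s)).
- by case: s sn0 => //= a s _; rewrite inE eqxx.
- move=> x y xs ys. rewrite /Num.min /Order.min. by case: ifP.
- by [].
Qed.

Lemma minseq_le s y : (forall x, x \in s -> x \is Num.real) -> y \in s ->
  minseq s <= y.
Proof.
move=> hr ys; have hh : head 0 s \is Num.real.
  by case: s hr ys => //= a s hr _; apply: hr; rewrite inE eqxx.
by have [_ _ ->] := bigmin_props hh hr.
Qed.

Lemma bigmax_ge (T : eqType) (t : seq T) (F : T -> C) y :
  (forall x, x \in t -> F x \is Num.real) -> y \in t ->
  F y <= \big[Num.max/0]_(x <- t) F x.
Proof.
elim: t => [|a t IH] //= hr; rewrite inE big_cons.
have hr' : forall x, x \in t -> F x \is Num.real.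
  by move=> x xt; apply: hr; rewrite inE xt orbT.
have Br : \big[Num.max/0]_(x <- t) F x \is Num.real.
  rewrite big_seq; apply: (big_ind (fun x => x \is Num.real)) => //.
  by move=> u v ur vr; rewrite /Num.max /Order.max; case: ifP.
have ar : F a \is Num.real by apply: hr; rewrite inE eqxx.
have [m1 m2 _] := max_real ar Br.
case/orP => [/eqP -> //|yt].
exact: le_trans (IH hr' yt) m2.
Qed.

Lemma distZ_spec w f : roots f != [::] ->
  (exists2 z, z \in roots f & distZ w f = `|w - z|) /\
  (forall z, z \in roots f -> distZ w f <= `|w - z|).
Proof.
move=> rn0; rewrite /distZ; split.
  have : minseq [seq `|w - x| | x <- roots f] \in [seq `|w - x| | x <- roots f].
    by apply: minseq_mem; case: (roots f) rn0.
  by case/mapP => z zr ->; exists z.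
move=> z zr; apply: minseq_le; last exact: map_f.
by move=> x /mapP [u _ ->]; apply: normr_real.
Qed.

Lemma tau_le f z v : z \in roots f -> v \in roots f^`() -> z != v ->
  tau f <= `|z - v|.
Proof.
move=> zr vr zv; rewrite /tau; apply: minseq_le.
  by move=> x /mapP [u _ ->]; apply: normr_real.
apply: (map_f (fun wv : C * C => `|wv.1 - wv.2|) (x := (z, v))).
rewrite mem_filter /= zv /=; apply/allpairsP; exists (z, v); split=> //.
Qed.

Lemma tau_mem f z v : z \in roots f -> v \in roots f^`() -> z != v ->
  exists z', exists v', [/\ z' \in roots f, v' \in roots f^`() & tau f = `|z' - v'|].
Proof.
move=> zr vr zv.
set L := [seq `|wv.1 - wv.2| | wv <- [seq (w, v) | w <- roots f, v <- roots f^`()]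
                              & wv.1 != wv.2].
have hL : (`|z - v|) \in L.
  apply: (map_f (fun wv : C * C => `|wv.1 - wv.2|) (x := (z, v))).
  rewrite mem_filter /= zv /=; apply/allpairsP; exists (z, v); split=> //.
have : minseq L \in L by apply: minseq_mem; case: L hL.
case/mapP => [[a b]]; rewrite mem_filter /= => /andP [_ /allpairsP [[c d] [/= cr dr [ea eb]]]] hm.
exists c, d; split=> //; rewrite /tau -/L hm ea eb.
done.
Qed.

End Aux.

Section L1.
Variable C : numClosedFieldType.
Implicit Types (p f h : {poly C}) (s : seq C).

Lemma derivn_XsubC_mul (z : C) h k :
  (('X - z%:P) * h)^`(k) = ('X - z%:P) * h^`(k) + h^`(k.-1) *+ k.
Proof.
elim: k => [|k IH]; first by rewrite !derivn0 mulr0n addr0.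
rewrite derivnS IH derivD derivM derivXsubC mul1r derivMn.
case: k IH => [|k] IH.
  by rewrite mulr0n derivn0 /= addr0 addrC mulr1n.
rewrite /= -!derivnS [X in _ = _ + X]mulrS.
by rewrite addrCA addrA.
Qed.

Lemma nat_ineq (N j : nat) : (N ^ j.+1 + j.+1 * N ^ j <= N.+1 ^ j.+1)%N.
Proof.
elim: j => [|j IH]; first by rewrite !expn1 expn0 muln1 addn1.
rewrite [(N.+1 ^ j.+2)%N]expnS.
apply: leq_trans (leq_mul (leqnn N.+1) IH).
rewrite !expnS.
move: (N ^ j)%N => a.
apply/ssrnat.leP; rewrite -!multE -!plusE; nia.
Qed.

Lemma L1prod s (w r : C) k : 0 <= r -> (forall z, z \in s -> r <= `|w - z|) ->
  `|(\prod_(z <- s) ('X - z%:P))^`(k).[w]| * r ^+ k <=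
  (size s)%:R ^+ k * `|(\prod_(z <- s) ('X - z%:P)).[w]|.
Proof.
move=> r0; elim: s k => [|z s IH] k hs.
  rewrite big_nil; case: k => [|k]; first by rewrite derivn0 expr0 mulr1 mul1r.
  by rewrite -polyC1 derivnC /= horner0 normr0 mul0r mulr_ge0 ?exprn_ge0 ?normr_ge0.
have hs' : forall y, y \in s -> r <= `|w - y| by move=> y ys; apply: hs; rewrite inE ys orbT.
have rz : r <= `|w - z| by apply: hs; rewrite inE eqxx.
rewrite big_cons; set h := \prod_(_ <- _) _.
case: k => [|j]; first by rewrite derivn0 expr0 mulr1 mul1r.
rewrite derivn_XsubC_mul [j.+1.-1]/= hornerD hornerM hornerMn hornerXsubC.
set a := `|w - z|; set b1 := `|h^`(j.+1).[w]|; set b0 := `|h^`(j).[w]|; set H := `|h.[w]|.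
have IH1 : b1 * r ^+ j.+1 <= (size s)%:R ^+ j.+1 * H := IH _ hs'.
have IH0 : b0 * r ^+ j <= (size s)%:R ^+ j * H := IH _ hs'.
have a0 : 0 <= a by apply: normr_ge0.
apply: le_trans (_ : (a * b1 + b0 *+ j.+1) * r ^+ j.+1 <= _).
  apply: ler_wpM2r; first exact: exprn_ge0.
  apply: le_trans (ler_normD _ _) _.
  by rewrite normrM normrMn.
rewrite mulrDl mulrnAl -mulrA.
apply: le_trans (_ : a * ((size s)%:R ^+ j.+1 * H) + ((size s)%:R ^+ j * H * a) *+ j.+1 <= _).
  apply: lerD; first by apply: ler_wpM2l.
  apply: ler_wMn2r; rewrite exprSr mulrA.
  by apply: ler_pM => //; rewrite mulr_ge0 ?exprn_ge0 ?normr_ge0.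
have -> : a * ((size s)%:R ^+ j.+1 * H) + (size s)%:R ^+ j * H * a *+ j.+1 =
   ((size s ^ j.+1 + j.+1 * size s ^ j)%N)%:R * (a * H).
  rewrite natrD natrM !natrX mulrDl; congr (_ + _).
    by rewrite mulrCA.
  by rewrite -mulr_natl -!mulrA [H * a]mulrC.
rewrite hornerM hornerXsubC normrM -/a -/H /= -natrX ler_wpM2r ?ler_nat ?mulr_ge0 ?normr_ge0 //.
exact: nat_ineq.
Qed.


Lemma L1gen p (w r : C) k : p != 0 -> 0 <= r ->
  (forall z, z \in roots p -> r <= `|w - z|) ->
  `|p^`(k).[w]| * r ^+ k <= ((size p).-1)%:R ^+ k * `|p.[w]|.
Proof.
move=> pn0 r0 hz; have e := roots_spec p.
set c := lead_coef p in e; set P := \prod_(_ <- _) _ in e.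
have -> : p^`(k).[w] = c * P^`(k).[w] by rewrite {1}e derivnZ hornerZ.
have -> : p.[w] = c * P.[w] by rewrite {1}e hornerZ.
rewrite -(size_roots pn0) !normrM -mulrA mulrCA.
rewrite mulrCA [X in _ <= X]mulrCA; apply: ler_wpM2l; first exact: normr_ge0.
exact: L1prod.
Qed.

Lemma simple_deriv f z : f != 0 -> root f z -> mup z f = 1%N -> ~~ root f^`() z.
Proof.
move=> fn0 /factor_theorem [q eq] hm.
have qz : ~~ root q z.
  apply/negP => /factor_theorem [q2 eq2].
  have : (2 <= mup z f)%N.
    by rewrite mup_geq // eq eq2 -mulrA -expr2 dvdp_mull.
  by rewrite hm.
by rewrite eq derivM derivXsubC mulr1 rootE hornerD hornerM hornerXsubC subrr mulr0 add0r.
Qed.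

Lemma size_deriv_ge f : (2 <= size f)%N -> ((size f).-1 <= size f^`())%N.
Proof.
move=> h2; rewrite leqNgt; apply/negP => hlt.
have fn0 : f != 0 by rewrite -size_poly_gt0; apply: leq_trans h2.
have e1 : (size f).-1 = ((size f).-2).+1 by case: (size f) h2 => [|[|m]].
have h' : (size f^`() <= (size f).-2)%N by rewrite -ltnS -e1.
have : f^`()`_((size f).-2) = 0 by move/leq_sizeP: h' => /(_ _ (leqnn _)).
rewrite coef_deriv -e1; move/eqP; rewrite mulrn_eq0 /=.
rewrite -lead_coefE lead_coef_eq0 (negbTE fn0) orbF => /eqP h.
by move: h2 h; case: (size f) => [|[|m]].
Qed.

End L1.

Section Fwd.
Variables (C : numClosedFieldType) (n : nat) (alpha : nat -> C).

Definition Bc := \sum_(1 <= k < n.+1) `|alpha k| * n%:R ^+ k.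
Definition Ac := \sum_(1 <= k < n.+1) `|alpha k| * n%:R ^+ k.-1.
Definition Kc := 1 + Bc.
Definition G0 := Kc * Kc + Kc + n%:R * Ac.

Lemma Bc_ge0 : 0 <= Bc.
Proof. by apply: sumr_ge0 => k _; rewrite mulr_ge0 ?normr_ge0 ?exprn_ge0 ?ler0n. Qed.
Lemma Ac_ge0 : 0 <= Ac.
Proof. by apply: sumr_ge0 => k _; rewrite mulr_ge0 ?normr_ge0 ?exprn_ge0 ?ler0n. Qed.
Lemma Kc_ge0 : 0 <= Kc.
Proof. by rewrite /Kc addr_ge0 ?ler01 ?Bc_ge0. Qed.
Lemma G0_ge0 : 0 <= G0.
Proof.
have K := Kc_ge0; have A := Ac_ge0.
by rewrite /G0; apply: addr_ge0; [apply: addr_ge0; [apply: mulr_ge0|]|apply: mulr_ge0]; rewrite ?ler0n.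
Qed.

Lemma Top_eval (f : {poly C}) (w : C) : (Top n alpha f).[w] =
  f.[w] + \sum_(1 <= k < n.+1) alpha k * f^`(k).[w].
Proof.
rewrite /Top hornerD horner_sum; congr (_ + _); apply: eq_bigr => k _.
by rewrite hornerZ.
Qed.

Lemma expn_mono (a b k : nat) : (a <= b)%N -> (a ^ k <= b ^ k)%N.
Proof. by move=> ab; elim: k => [|k IH] //; rewrite !expnS leq_mul. Qed.

Lemma natX_mono (a k : nat) : (a <= n)%N -> a%:R ^+ k <= n%:R ^+ k :> C.
Proof. by move=> an; rewrite -!natrX ler_nat expn_mono. Qed.

Lemma fwd_bound (f : {poly C}) (w : C) : alpha 1%N = 0 -> (size f <= n.+1)%N -> (3 <= size f)%N ->
  simple_roots f -> w \in roots (Top n alpha f) -> tau f * distZ w f <= G0.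
Proof.
move=> a1 hs h3 hsimp hw.
have h2 : (2 <= size f)%N by apply: leq_trans h3.
have fn0 : f != 0 by rewrite -size_poly_gt0; apply: leq_trans h3.
have hsf' : (2 <= size f^`())%N.
  apply: leq_trans (size_deriv_ge h2); by case: (size f) h3 => [|[|[|m]]].
have f'n0 : f^`() != 0 by rewrite -size_poly_gt0; apply: leq_trans hsf'.
have rfn : roots f != [::].
  by rewrite -size_eq0 size_roots //; case: (size f) h3 => [|[|[|m]]].
have rf'n : roots f^`() != [::].
  by rewrite -size_eq0 size_roots //; case: (size f^`()) hsf' => [|[|m]].
have [[z0 z0r rdef] rle] := distZ_spec w rfn.
have [[v0 v0r pdef] ple] := distZ_spec w rf'n.
set r := distZ w f in rdef rle *.
set p := distZ w f^`() in pdef ple.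
have r0 : 0 <= r by rewrite rdef normr_ge0.
have p0 : 0 <= p by rewrite pdef normr_ge0.
have rr : r \is Num.real by rewrite rdef normr_real.
have pr : p \is Num.real by rewrite pdef normr_real.
have zv : z0 != v0.
  apply/eqP => e.
  have hz := root_of_roots z0r.
  have := simple_deriv fn0 hz (hsimp _ hz).
  by rewrite e (root_of_roots v0r).
have ht : tau f <= r + p.
  apply: le_trans (tau_le z0r v0r zv) _; rewrite rdef pdef.
  have -> : z0 - v0 = (z0 - w) + (w - v0) by rewrite addrA subrK.
  by apply: le_trans (ler_normD _ _) _; rewrite distrC.
have hroot : f.[w] + \sum_(1 <= k < n.+1) alpha k * f^`(k).[w] = 0.
  by rewrite -Top_eval; apply/eqP; exact: (root_of_roots hw).
have hnorm : `|f.[w]| <= \sum_(1 <= k < n.+1) `|alpha k| * `|f^`(k).[w]|.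
  have -> : f.[w] = - \sum_(1 <= k < n.+1) alpha k * f^`(k).[w].
    by apply/eqP; rewrite -addr_eq0 hroot.
  rewrite normrN; apply: le_trans (ler_norm_sum _ _ _) _.
  by apply: ler_sum => k _; rewrite normrM.
have msize : ((size f).-1 <= n)%N by rewrite -ltnS; case: (size f) hs h3.
have msize' : ((size f^`()).-1 <= n)%N.
  apply: leq_trans msize; rewrite -!subn1 leq_sub2r // ltnW //.
  exact: lt_size_deriv.
have rK : r <= Kc.
  case: (real_leP rr (real1 C)) => h1.
    by apply: le_trans h1 _; rewrite /Kc lerDl Bc_ge0.
  have fw : f.[w] != 0.
    apply/negP => /eqP fw0.
    have : w \in roots f by rewrite mem_roots // rootE fw0.
    move/rle; rewrite subrr normr0 => rle0.
    by move: (lt_le_trans (lt_trans ltr01 h1) rle0); rewrite ltxx.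
  have step : `|f.[w]| * r <= Bc * `|f.[w]|.
    apply: le_trans (ler_wpM2r r0 hnorm) _.
    rewrite mulr_suml /Bc mulr_suml; apply: ler_sum_nat => k /andP [hk _].
    rewrite -!mulrA; apply: ler_wpM2l; first exact: normr_ge0.
    apply: le_trans (_ : `|f^`(k).[w]| * r ^+ k <= _).
      by apply: ler_wpM2l; [exact: normr_ge0 | exact: ler_eXnr (ltW h1)].
    apply: le_trans (L1gen k fn0 r0 rle) _.
    by apply: ler_wpM2r; [exact: normr_ge0 | exact: natX_mono].
  have rB : r <= Bc.
    by move: step; rewrite mulrC ler_pM2r ?normr_gt0.
  by apply: le_trans rB _; rewrite /Kc lerDr ler01.
have hrr : r * r <= Kc * Kc by apply: ler_pM.
apply: le_trans (ler_wpM2r r0 ht) _; rewrite mulrDl.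
case: (real_ltP pr (real1 C)) => hp1.
  have : p * r <= Kc.
    apply: le_trans (_ : 1 * r <= _); last by rewrite mul1r.
    by apply: ler_wpM2r => //; exact: ltW.
  move=> hpr; rewrite /G0 -addrA; apply: lerD => //.
  by apply: le_trans hpr _; rewrite lerDl mulr_ge0 ?ler0n ?Ac_ge0.
have f'w : f^`().[w] != 0.
  apply/negP => /eqP fw0.
  have : w \in roots f^`() by rewrite mem_roots // rootE fw0.
  move/ple; rewrite subrr normr0 => ple0.
  by move: (lt_le_trans ltr01 (le_trans hp1 ple0)); rewrite ltxx.
have hA : `|f.[w]| * p <= Ac * `|f^`().[w]|.
  apply: le_trans (ler_wpM2r p0 hnorm) _.
  rewrite mulr_suml /Ac mulr_suml; apply: ler_sum_nat => k /andP [hk _].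
  case: k hk => [|[|j]] // _.
    by rewrite a1 normr0 !mul0r.
  rewrite -!mulrA; apply: ler_wpM2l; first exact: normr_ge0.
  rewrite derivSn.
  apply: le_trans (_ : `|(f^`())^`(j.+1).[w]| * p ^+ j.+1 <= _).
    by apply: ler_wpM2l; [exact: normr_ge0 | exact: ler_eXnr hp1].
  apply: le_trans (L1gen j.+1 f'n0 p0 ple) _.
  by apply: ler_wpM2r; [exact: normr_ge0 | exact: natX_mono].
have hB : `|f^`().[w]| * r <= n%:R * `|f.[w]|.
  have := L1gen 1 fn0 r0 rle; rewrite derivn1 !expr1 => h.
  apply: le_trans h _; apply: ler_wpM2r; first exact: normr_ge0.
  by rewrite ler_nat.
have hrp : p * r <= n%:R * Ac.
  have : `|f^`().[w]| * (r * p) <= `|f^`().[w]| * (n%:R * Ac).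
    rewrite [X in X <= _]mulrA; apply: le_trans (ler_wpM2r p0 hB) _.
    rewrite -mulrA; apply: le_trans (ler_wpM2l (ler0n _ _) hA) _.
    by rewrite [Ac * _]mulrC mulrCA.
  by rewrite ler_pM2l ?normr_gt0 // mulrC.
rewrite /G0 -addrA; apply: lerD => //.
by apply: le_trans hrp _; rewrite lerDr Kc_ge0.
Qed.

End Fwd.

Section Bwd.
Variables (C : numClosedFieldType).

Lemma quadE (a b : C) :
  ('X - a%:P) * ('X - b%:P) = 'X^2 + (- (a + b))%:P * 'X + (a * b)%:P.
Proof.
rewrite mulrBr !mulrBl -expr2 polyCN polyCD polyCM mulNr mulrDl.
rewrite [b%:P * 'X]mulrC opprB.
by rewrite opprD addrA [in RHS]addrA addrAC.
Qed.

Lemma bwd (n : nat) (alpha : nat -> C) (Gamma : C) : (2 <= n)%N -> alpha 1%N != 0 ->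
  0 < Gamma -> exists f : {poly C}, [/\ (size f <= n.+1)%N, (3 <= size f)%N,
    simple_roots f & Gamma <= tau f * RT n alpha f].
Proof.
move=> hn an0 G0.
set a := `|alpha 1%N|.
have a0 : 0 < a by rewrite normr_gt0.
set l := a *+ 2 + Gamma / a.
have l2a : a *+ 2 <= l by rewrite lerDl divr_ge0 // ltW.
have l0 : 0 < l by apply: lt_le_trans l2a; rewrite pmulrn_rgt0.
have ln0 : l != 0 by rewrite lt0r_neq0.
have lneq : l != - l.
  apply/eqP => e; have h : l + l = 0 by rewrite {1}e addNr.
  by move: h; rewrite -mulr2n; move/eqP; rewrite mulrn_eq0 /= (negbTE ln0).
set f := \prod_(z <- [:: l; - l]) ('X - z%:P).
have fE : f = 'X^2 - (l ^+ 2)%:P.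
  by rewrite /f !big_cons big_nil mulr1 rmorphXn subr_sqr polyCN opprK.
have fn0 : f != 0 by rewrite monic_neq0 // monic_prod_XsubC.
have sf : size f = 3%N by rewrite size_prod_XsubC.
have rootsf : forall x, x \in roots f -> x = l \/ x = - l.
  move=> x; rewrite mem_roots // root_prod_XsubC !inE.
  by case/orP => /eqP ->; [left|right].
have lrf : l \in roots f by rewrite mem_roots // root_prod_XsubC !inE eqxx.
have rfn : roots f != [::] by case: (roots f) lrf.
have f'E : f^`() = 'X *+ 2.
  by rewrite fE derivB derivXn derivC subr0 expr1.
have f'n0 : f^`() != 0.
  apply/negP => /eqP e; have := congr1 (fun p => p.[1]) e.
  by rewrite f'E /= hornerMn hornerX horner0 => /eqP; rewrite mulrn_eq0 /= oner_eq0.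
have rootsf' : forall v, v \in roots f^`() -> v = 0.
  move=> v; rewrite mem_roots // rootE f'E hornerMn hornerX mulrn_eq0 /=.
  by move/eqP.
have zrf' : 0 \in roots f^`().
  by rewrite mem_roots // rootE f'E hornerMn hornerX mul0rn.
have tauE : tau f = l.
  have [z' [v' [zr vr ->]]] := tau_mem lrf zrf' ln0.
  rewrite (rootsf' _ vr) subr0.
  by case: (rootsf _ zr) => ->; rewrite ?normrN gtr0_norm.
have TfE : Top n alpha f = 'X^2 + (alpha 1%N *+ 2)%:P * 'X + (alpha 2%N *+ 2 - l ^+ 2)%:P.
  rewrite /Top big_ltn ?ltnS 1?ltnW // big_ltn //.
  rewrite big_nat_cond big1 ?addr0; last first.
    move=> k /andP [/andP [hk _] _].
    by rewrite derivn_poly0 ?scaler0 // sf.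
  rewrite derivn1 f'E (derivnS f 1) derivn1 f'E derivMn derivX fE.
  rewrite mul_polyC -scalerMnl scalerMnr polyCB rmorphMn.
  have -> : alpha 2%N *: (2 : {poly C}) = (alpha 2%N)%:P *+ 2.
    by rewrite -mul_polyC mulr_natr.
  rewrite addrA [in RHS]addrA (addrAC _ (- (l ^+ 2)%:P) (alpha 1%N *: _)).
  by rewrite (addrAC _ (- (l ^+ 2)%:P)).
set c := alpha 2%N *+ 2 - l ^+ 2 in TfE.
set s := sqrtC (alpha 1%N ^+ 2 - c).
set w1 := - alpha 1%N + s; set w2 := - alpha 1%N - s.
have sw : w1 + w2 = - (alpha 1%N *+ 2).
  by rewrite /w1 /w2 addrACA subrr addr0 -mulr2n mulNrn.
have pw : w1 * w2 = c.
  rewrite /w1 /w2 mulrC -subr_sqr sqrrN sqrtCK.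
  by rewrite opprB addrC subrK.
have TfP : Top n alpha f = ('X - w1%:P) * ('X - w2%:P).
  by rewrite quadE sw opprK pw TfE.
have Tfn0 : Top n alpha f != 0 by rewrite TfP mulf_neq0 ?polyXsubC_eq0.
have w1r : w1 \in roots (Top n alpha f).
  by rewrite mem_roots // TfP rootM root_XsubC eqxx.
have w2r : w2 \in roots (Top n alpha f).
  by rewrite mem_roots // TfP rootM !root_XsubC eqxx orbT.
have dreal : forall x, x \in roots (Top n alpha f) -> distZ x f \is Num.real.
  by move=> x _; have [[z _ ->] _] := distZ_spec x rfn; apply: normr_real.
have RT1 := bigmax_ge (F := fun x => distZ x f) dreal w1r.
have RT2 := bigmax_ge (F := fun x => distZ x f) dreal w2r.
rewrite -/(RT n alpha f) in RT1 RT2.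
have [[z1 z1r d1] _] := distZ_spec w1 rfn.
have [[z2 z2r d2] _] := distZ_spec w2 rfn.
have helper : forall v, `|v| = l *+ 2 -> a *+ 2 <= `|alpha 1%N *+ 2 + v|.
  move=> v hv; rewrite addrC; apply: le_trans (lerB_normD _ _).
  rewrite hv normrMn -/a lerBrDr -mulr2n ler_pMn2r //.
have key : a *+ 2 <= `|alpha 1%N *+ 2 + (z1 + z2)|.
  case: (rootsf _ z1r) => ->; case: (rootsf _ z2r) => ->.
  - by apply: helper; rewrite -mulr2n normrMn gtr0_norm.
  - by rewrite subrr addr0 normrMn.
  - by rewrite addNr addr0 normrMn.
  - by apply: helper; rewrite -mulr2n normrMn normrN gtr0_norm.
have dsum : a *+ 2 <= distZ w1 f + distZ w2 f.
  apply: le_trans key _; rewrite d1 d2.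
  have -> : alpha 1%N *+ 2 + (z1 + z2) = - ((w1 - z1) + (w2 - z2)).
    by rewrite [in RHS]addrACA sw opprD opprK opprD !opprK.
  by rewrite normrN ler_normD.
have RTa : a <= RT n alpha f.
  rewrite -(ler_pMn2r (_ : 0 < 2)%N) //; apply: le_trans dsum _.
  by rewrite mulr2n lerD.
exists f; split => //; first by rewrite sf.
  by rewrite sf.
  move=> z; rewrite root_prod_XsubC mu_prod_XsubC !inE.
  case/orP => /eqP ->; rewrite /= eqxx ?(negbTE lneq) //.
  by rewrite eq_sym (negbTE lneq).
rewrite tauE; apply: le_trans (_ : l * a <= _); last first.
  by apply: ler_wpM2l => //; apply: ltW.
rewrite /l mulrDl divfK ?lt0r_neq0 // lerDr.
by rewrite mulr_ge0 // ?normr_ge0 // mulrn_wge0 // normr_ge0.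
Qed.

End Bwd.

End Helpers.
Import Helpers.

Theorem theorem3p1 (C : numClosedFieldType) (n : nat) (alpha : nat -> C) :
  (2 <= n)%N ->
  (alpha 1%N = 0 <->
   exists Gamma : C, 0 < Gamma /\
     forall f : {poly C}, (size f <= n.+1)%N -> (3 <= size f)%N ->
       simple_roots f -> tau f * RT n alpha f < Gamma).
Proof.
move=> hn; split.
- move=> a1; exists (G0 n alpha + 1); split.
    exact: ltr_wpDl (G0_ge0 n alpha) ltr01.
  move=> f hs h3 hsimp.
  apply: le_lt_trans (_ : tau f * RT n alpha f <= G0 n alpha) _; last first.
    by rewrite ltrDl ltr01.
  rewrite /RT big_seq; apply: (big_ind (fun x => tau f * x <= G0 n alpha)).
  + by rewrite mulr0 G0_ge0.
  + by move=> x y hx hy; rewrite /Num.max /Order.max; case: ifP.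
  + by move=> w hw; apply: fwd_bound.
- case=> Gamma [Gp H]; case: (eqVneq (alpha 1%N) 0) => // ane.
  have [f [h1 h2 h3 h4]] := bwd hn ane Gp.
  by have := lt_le_trans (H f h1 h2 h3) h4; rewrite ltxx.
Qed.
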